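(* Let $G$, $\widehat{D}$, $\mathcal{C}$, $\mathbf{H}_d$ and $D$ be as in the context. If $\widehat{D}$ is a chainable distance function, then the EC-distance $D:G\to\mathbb{R}_+$ has minima only on the curve $\mathcal{C}$ (i.e., no point $\mathbf{B}\notin\mathcal{C}$ is a local minimum of $D$). Furthermore, all these minima are global.
   Context: $G$ is a connected matrix Lie group of $n\times n$ real matrices of dimension $m$, with Lie algebra $\mathfrak{g}$, basis $\mathbf{E}_1,\dots,\mathbf{E}_m$, and $S(\boldsymbol{\zeta})=\sum_k\zeta_k\mathbf{E}_k$. For $f:G\to\mathbb{R}$, $\mathrm{L}[f](\mathbf{G})$ is the row vector with $j$-th entry $\lim_{\epsilon\to0}\frac1\epsilon(f(\exp(S(\mathbf{e}_j)\epsilon)\mathbf{G})-f(\mathbf{G}))$; partial versions $\mathrm{L}_{\mathbf{V}},\mathrm{L}_{\mathbf{W}}$ are defined for two-argument functions; differentiability at a point means these limits exist and are continuous there. An EE-distance function is $\widehat{D}:G\times G\to\mathbb{R}_+$ with: (a) $\widehat{D}(\mathbf{V},\mathbf{W})\ge0$, $=0$ iff $\mathbf{V}=\mathbf{W}$; (b) differentiable in both arguments almost everywhere, with some $D_{\min,\mathcal{C}}>0$ such that the derivatives exist whenever $0<\widehat{D}<D_{\min,\mathcal{C}}$, and where a partial $\mathrm{L}$-derivative does not exist all its directional limits exist and are bounded. A path generating function is $\Phi:[0,1]\times G\times G\to G$, differentiable in $\sigma$, with $\Phi(0,\mathbf{V},\mathbf{W})=\mathbf{V}$, $\Phi(1,\mathbf{V},\mathbf{W})=\mathbf{W}$.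 $\widehat{D}$ is chainable if it is an EE-distance and there exists a path generating function $\Phi$ with $\widehat{D}(\mathbf{V},\mathbf{W})=\widehat{D}(\mathbf{V},\Phi(\sigma,\mathbf{V},\mathbf{W}))+\widehat{D}(\Phi(\sigma,\mathbf{V},\mathbf{W}),\mathbf{W})$ for all $\mathbf{V},\mathbf{W}\in G$, $\sigma\in[0,1]$. $\mathcal{C}$ is the image of a differentiable map $\mathbf{H}_d:[0,1]\to G$ without self-intersections, and the EC-distance is $D(\mathbf{H})\triangleq\min_{s\in[0,1]}\widehat{D}(\mathbf{H},\mathbf{H}_d(s))$. *)

(* Defs.v *)
From HB Require Import structures.
From mathcomp Require Import all_boot all_order all_algebra.
From mathcomp Require Import all_classical all_reals all_analysis.
Set Implicit Arguments. Unset Strict Implicit. Unset Printing Implicit Defensive.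
Import Order.TTheory GRing.Theory Num.Theory.
Import numFieldNormedType.Exports.
Local Open Scope classical_set_scope.
Local Open Scope ring_scope.

Section Defs.
Variables (R : realType) (n m : nat).
(* matrices of size n.+1 x n.+1 (i.e. the paper's n >= 1) *)
Local Notation M := 'M[R]_n.+1.

Definition expmx (A : M) : M :=
  lim ((fun N : nat => \sum_(0 <= k < N) (k`!%:R)^-1 *: A ^+ k) @ \oo).

Definition matrix_lie_group (G : set M) : Prop :=
  [/\ (forall A, G A -> A \in unitmx),
      G 1%:M,
      (forall A B, G A -> G B -> G (A *m B)),
      (forall A, G A -> G (invmx A)) &
      (forall A, A \in unitmx -> closure G A -> G A)].

Definition lie_algebra (G : set M) : set M :=
  [set X | forall t : R, G (expmx (t *: X))].

Definition lie_basis (G : set M) (E : 'I_m -> M) : Prop :=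
  (forall c : 'I_m -> R, \sum_(i < m) c i *: E i = 0 -> forall i, c i = 0) /\
  lie_algebra G = range (fun c : 'I_m -> R => \sum_(i < m) c i *: E i).

Definition Smap (E : 'I_m -> M) (z : 'rV[R]_m) : M :=
  \sum_(k < m) z ord0 k *: E k.

Definition dq (E : 'I_m -> M) (f : M -> R) (A : M) (z : 'rV[R]_m) (eps : R) : R :=
  eps^-1 * (f (expmx (eps *: Smap E z) *m A) - f A).

Definition ej (j : 'I_m) : 'rV[R]_m := delta_mx ord0 j.

Definition L_exists (E : 'I_m -> M) (f : M -> R) (A : M) : Prop :=
  forall j, cvg (dq E f A (ej j) @ 0^').

Definition Lder (E : 'I_m -> M) (f : M -> R) (A : M) (j : 'I_m) : R :=
  lim (dq E f A (ej j) @ 0^').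

Definition L_diff_at (G : set M) (E : 'I_m -> M) (f : M -> R) (A : M) : Prop :=
  (\forall B \near A, G B -> L_exists E f B) /\
  forall j, (fun B => Lder E f B j) @ within G (nbhs A) --> Lder E f A j.

Definition dir_limits_bounded (E : 'I_m -> M) (f : M -> R) (A : M) : Prop :=
  exists K : R, forall z : 'rV[R]_m, `|z| <= 1 ->
    exists l : R, dq E f A z @ 0^'+ --> l /\ `|l| <= K.

Definition EE_distance (G : set M) (E : 'I_m -> M) (Dh : M -> M -> R) : Prop :=
  [/\ (forall V W, G V -> G W -> 0 <= Dh V W /\ (Dh V W = 0 <-> V = W)),
      (exists Dmin : R, 0 < Dmin /\
        forall V W, G V -> G W -> 0 < Dh V W < Dmin ->
          L_diff_at G E (fun X => Dh X W) V /\ L_diff_at G E (fun X => Dh V X) W) &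
      (forall V W, G V -> G W ->
          (~ L_diff_at G E (fun X => Dh X W) V -> dir_limits_bounded E (fun X => Dh X W) V) /\
          (~ L_diff_at G E (fun X => Dh V X) W -> dir_limits_bounded E (fun X => Dh V X) W))].

Definition diff01 (f : R -> M) : Prop :=
  [/\ (forall s, 0 < s < 1 -> derivable f s 1),
      cvg ((fun h => h^-1 *: (f h - f 0)) @ 0^'+) &
      cvg ((fun h => h^-1 *: (f (1 + h) - f 1)) @ 0^'-)].

Definition path_generating (G : set M) (Phi : R -> M -> M -> M) : Prop :=
  forall V W, G V -> G W ->
    [/\ (forall s, 0 <= s <= 1 -> G (Phi s V W)),
        diff01 (fun s => Phi s V W),
        Phi 0 V W = V &
        Phi 1 V W = W].

Definition chainable (G : set M) (E : 'I_m -> M) (Dh : M -> M -> R) : Prop :=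
  EE_distance G E Dh /\
  exists Phi, path_generating G Phi /\
    forall V W s, G V -> G W -> 0 <= s <= 1 ->
      Dh V W = Dh V (Phi s V W) + Dh (Phi s V W) W.

Definition curve (Hd : R -> M) : set M := Hd @` [set s : R | 0 <= s <= 1].

(* EC-distance D(H) = min_{s in [0,1]} Dh(H, H_d(s)) (taken as an infimum;
   attainment is a separate hypothesis) *)
Definition EC_distance (Dh : M -> M -> R) (Hd : R -> M) (H : M) : R :=
  inf [set Dh H (Hd s) | s in [set s : R | 0 <= s <= 1]].

Definition local_min_on (G : set M) (f : M -> R) (B : M) : Prop :=
  G B /\ \forall A \near B, G A -> f B <= f A.

End Defs.

(* Main.v *)
Require Import Defs.
From HB Require Import structures.
From mathcomp Require Import all_boot all_order all_algebra.
From mathcomp Require Import all_classical all_reals all_analysis.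
From mathcomp Require Import lra.
Import Order.TTheory GRing.Theory Num.Theory.
Import numFieldNormedType.Exports.
Local Open Scope classical_set_scope.
Local Open Scope ring_scope.

Lemma diffq_to0 (R : realType) (V : normedModType R) (F : set_system R)
  (FF : Filter F) (g : R -> V) :
  (fun h : R => h) @ F --> (0:R) -> (\forall h \near F, h != 0) ->
  cvg ((fun h => h^-1 *: g h) @ F) -> g @ F --> 0.
Proof.
move=> h0 hn0 /cvg_ex [l Hl].
have -> : (0 : V) = 0 *: l by rewrite scale0r.
apply: (@cvg_trans _ ((fun h => h *: (h^-1 *: g h)) @ F)).
  apply: near_eq_cvg; near=> h; rewrite scalerA mulfV ?scale1r //.
  by near: h.
exact: cvgZ.
Unshelve. all: by end_near. Qed.

Lemma right_cont (R : realType) (V : normedModType R) (f : R -> V) :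
  cvg ((fun h : R => h^-1 *: (f h - f 0)) @ 0^'+) -> f @ 0^'+ --> f 0.
Proof.
move=> H.
have H0 := @diffq_to0 R V _ _ (fun h => f h - f 0)
  (cvg_at_right_filter cvg_id) _ H.
have {}H0 : (fun h => f h - f 0) @ 0^'+ --> 0.
  apply: H0; near=> h; apply: lt0r_neq0.
  by near: h; exact: nbhs_right_gt.
apply/cvgrPdist_lt => e e0.
move/cvgrPdist_lt : H0 => /(_ e e0); apply: filterS => h.
by rewrite sub0r normrN distrC.
Unshelve. all: by end_near. Qed.

Lemma left_cont (R : realType) (V : normedModType R) (f : R -> V) :
  cvg ((fun h : R => h^-1 *: (f (1 + h) - f 1)) @ 0^'-) -> f @ 1^'- --> f 1.
Proof.
move=> H.
have H0 := @diffq_to0 R V _ _ (fun h => f (1 + h) - f 1)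
  (cvg_at_left_filter cvg_id) _ H.
have {}H0 : (fun h => f (1 + h) - f 1) @ 0^'- --> 0.
  apply: H0; near=> h; apply: ltr0_neq0.
  by near: h; exact: nbhs_left_lt.
apply/cvgrPdist_lt => e e0.
move/cvgrPdist_lt : H0 => /(_ e e0).
move=> /nbhs_left0P H1; apply/nbhs_left0P.
move: H1; apply: filterS => h.
by rewrite sub0r normrN distrC add0r.
Unshelve. all: by end_near. Qed.

Theorem proposition2 (R : realType) (n m : nat)
  (G : set 'M[R]_n.+1) (E : 'I_m -> 'M[R]_n.+1)
  (Dh : 'M[R]_n.+1 -> 'M[R]_n.+1 -> R) (Hd : R -> 'M[R]_n.+1) :
  matrix_lie_group G -> connected G -> lie_basis G E ->
  diff01 Hd ->
  (forall s, 0 <= s <= 1 -> G (Hd s)) ->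
  (forall s t, 0 <= s <= 1 -> 0 <= t <= 1 -> Hd s = Hd t -> s = t) ->
  (forall H, G H -> exists2 s, 0 <= s <= 1 &
       forall t, 0 <= t <= 1 -> Dh H (Hd s) <= Dh H (Hd t)) ->
  chainable G E Dh ->
  forall B, local_min_on G (EC_distance Dh Hd) B ->
    curve Hd B /\
    (forall A, G A -> EC_distance Dh Hd B <= EC_distance Dh Hd A).
Proof.
move=> _ _ _ _ HdG _ Hmin [[Hpos _ _] [Phi [Hpath Hchain]]] B [GB Bloc].
have I01 : 0 <= (0:R) <= 1 by rewrite lexx ler01.
have Dge0 : forall A, G A -> 0 <= EC_distance Dh Hd A.
  move=> A GA; apply: lb_le_inf.
    by exists (Dh A (Hd 0)), 0.
  by move=> _ [s s01 <-]; case: (Hpos A (Hd s) GA (HdG s s01)).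
have Dle : forall A s, G A -> 0 <= s <= 1 -> EC_distance Dh Hd A <= Dh A (Hd s).
  move=> A s GA s01; apply: ge_inf; last by exists s.
  exists 0 => _ [t t01 <-]; by case: (Hpos A (Hd t) GA (HdG t t01)).
suff CB : curve Hd B.
  split => // A GA; case: CB => s s01 Hs.
  apply: (le_trans (Dle B s GB s01)); rewrite Hs.
  have [_ /(_ erefl) ->] := (Hpos B B GB GB).2.
  exact: Dge0.
apply: contrapT => nC.
have [s s01 smin] := Hmin B GB.
set W := Hd s.
have GW : G W by exact: HdG.
have WB : W != B by apply/eqP => WB; apply: nC; exists s.
have DB : EC_distance Dh Hd B = Dh B W.
  apply/eqP; rewrite eq_le Dle //=; apply: lb_le_inf; first by exists (Dh B W), s.
  by move=> _ [t t01 <-]; exact: smin.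
move: Bloc => /nbhs_ballP [e /= e0 He].
have [Pin Pd P0 P1] := Hpath B W GB GW.
case: Pd => Pd Pr Pl.
set g := fun x => Phi x B W.
have gc : {within `[0, 1], continuous g}.
  apply: derivable_oo_LRcontinuous_within; split.
  - move=> x; rewrite in_itv /= => x01; exact: Pd.
  - by apply: right_cont; exact: Pr.
  - by apply: left_cont; exact: Pl.
set f := fun x => `|g x - B|.
have fc : {within `[0, 1], continuous f}.
  move=> x; apply: cvg_norm; apply: cvgB; [exact: gc | exact: cvg_cst].
have f0 : f 0 = 0 by rewrite /f /g P0 subrr normr0.
have f1 : 0 < f 1 by rewrite /f /g P1 normr_gt0 subr_eq0.
set v := Num.min e (f 1) / 2.
have v0 : 0 < v by rewrite divr_gt0 // lt_min e0 f1.
have ve : v < e.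
  have : Num.min e (f 1) <= e by rewrite ge_min lexx.
  rewrite /v; lra.
have vf : v <= f 1.
  have : Num.min e (f 1) <= f 1 by rewrite ge_min lexx orbT.
  rewrite /v; lra.
have hv : Num.min (f 0) (f 1) <= v <= Num.max (f 0) (f 1).
  rewrite f0 /Num.min /Num.max f1 /= vf (ltW v0); done.
have [c c01 fc_v] := IVT ler01 fc hv.
have c01' : 0 <= c <= 1 by move: c01; rewrite in_itv.
have GPc : G (g c) by exact: Pin.
have Pne : g c != B.
  by rewrite -subr_eq0 -normr_gt0 -/(f c) fc_v.
have Pball : ball B e (g c).
  by rewrite -ball_normE /ball_ /= distrC -/(f c) fc_v.
have := He _ Pball GPc.
rewrite DB => HBle.
have := Dle _ s GPc s01; rewrite -/W => Hle2.
have Hch := Hchain B W c GB GW c01'.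
have [Hp1 Hq1] := Hpos B (g c) GB GPc.
have Hp2 : Dh B (g c) != 0.
  apply/eqP => /Hq1 Heq; by move: Pne; rewrite Heq eqxx.
have Hp3 : 0 < Dh B (g c) by rewrite lt_def Hp2 Hp1.
rewrite /g in Hp3 Hle2 HBle.
move: HBle Hle2 Hch Hp3; lra.
Qed.
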